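(* Let $\beta=\beta(s)$ be a unit speed semi-real quaternionic curve in $\mathcal{Q}_v$ with non-zero curvatures $\kappa(s)$, $k(s)$ and $(r-\varepsilon_t\varepsilon_T\varepsilon_{N_1}\kappa)(s)$. Then $\beta$ is congruent to a semi-real quaternionic rectifying curve if and only if, for some $c\in\mathbb{R}$, $$\varepsilon_t\varepsilon_{n_1}\varepsilon_{N_1}\frac{\kappa(s)(r-\varepsilon_t\varepsilon_T\varepsilon_{N_1}\kappa)(s)\,(s+c)}{k(s)}+\varepsilon_t\varepsilon_{n_2}\varepsilon_{N_1}\left[\frac{\kappa(s)k(s)+(s+c)[\kappa'(s)k(s)-\kappa(s)k'(s)]}{k^2(s)(r-\varepsilon_t\varepsilon_T\varepsilon_{N_1}\kappa)(s)}\right]'=0.$$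
   Context: $\mathcal{Q}_v$ denotes the semi-real quaternions, identified with the semi-Euclidean space $\mathbb{R}^4_2$ with inner product $h(p,q)=p_1q_1+p_2q_2-p_3q_3-p_4q_4$. A semi-real quaternionic curve $\beta:I\to\mathcal{Q}_v$ is unit speed (pseudo arc length $s$) if $T=\beta'$ satisfies $h(T,T)=\varepsilon_T=\pm1$. Its non-null Serret–Frenet frame $\{T,N_1,N_2,N_3\}$ satisfies $T'=\varepsilon_{N_1}\kappa N_1$, $N_1'=-\varepsilon_t\varepsilon_{N_1}\kappa T+\varepsilon_{n_1}kN_2$, $N_2'=-\varepsilon_t kN_1+\varepsilon_{n_1}(r-\varepsilon_t\varepsilon_T\varepsilon_{N_1}\kappa)N_3$, $N_3'=-\varepsilon_{n_2}(r-\varepsilon_t\varepsilon_T\varepsilon_{N_1}\kappa)N_2$, where $\kappa=\varepsilon_{N_1}\|T'\|$ is the principal curvature of $\beta$; $k$ and $r$ are the principal curvature and torsion of the associated semi-real spatial quaternionic curve $\alpha$ in $\mathbb{R}^3_1$ whose Frenet frame $\{\mathbf{t},\mathbf{n}_1,\mathbf{n}_2\}$ has signs $h(\mathbf{t},\mathbf{t})=\varepsilon_t$, $h(\mathbf{n}_1,\mathbf{n}_1)=\varepsilon_{n_1}$, $h(\mathbf{n}_2,\mathbf{n}_2)=\varepsilon_{n_2}$, related to $\beta$'s frame by $N_1=\varepsilon_T(\mathbf{t}\times T)$, $N_2=\varepsilon_T(\mathbf{n}_1\times T)$, $N_3=\varepsilon_T(\mathbf{n}_2\times T)$ ($\times$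 the semi-real quaternion product); moreover $h(N_1,N_1)=\varepsilon_{N_1}$, $h(N_2,N_2)=\varepsilon_{n_1}\varepsilon_T$, $h(N_3,N_3)=\varepsilon_{n_2}\varepsilon_T$. Thus $k$ is the torsion and $r-\varepsilon_t\varepsilon_T\varepsilon_{N_1}\kappa$ the bitorsion of $\beta$. $\beta$ is a semi-real quaternionic rectifying curve if $\beta(s)=\lambda(s)T(s)+\mu(s)N_2(s)+\nu(s)N_3(s)$ for some differentiable functions $\lambda,\mu,\nu$; congruent means equal up to a rigid motion (here a translation). *)

(* Defs.v *)
From Stdlib Require Import Reals.
From Coquelicot Require Import Coquelicot.
Open Scope R_scope.

(* Semi-real quaternions Q_v, identified with the semi-Euclidean space R^4_2. *)
Record quat := Quat { q1 : R; q2 : R; q3 : R; q4 : R }.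

Definition qadd (p q : quat) : quat :=
  Quat (q1 p + q1 q) (q2 p + q2 q) (q3 p + q3 q) (q4 p + q4 q).

Definition qscale (a : R) (p : quat) : quat :=
  Quat (a * q1 p) (a * q2 p) (a * q3 p) (a * q4 p).

Definition h (p q : quat) : R :=
  q1 p * q1 q + q2 p * q2 q - q3 p * q3 q - q4 p * q4 q.

Definition is_qderive (f : R -> quat) (s : R) (v : quat) : Prop :=
  is_derive (fun u => q1 (f u)) s (q1 v) /\
  is_derive (fun u => q2 (f u)) s (q2 v) /\
  is_derive (fun u => q3 (f u)) s (q3 v) /\
  is_derive (fun u => q4 (f u)) s (q4 v).

Definition is_sign (e : R) : Prop := e = 1 \/ e = -1.

Definition is_interval (I : R -> Prop) : Prop :=
  forall x y z, I x -> I z -> x <= y <= z -> I y.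

Definition smooth_on (I : R -> Prop) (f : R -> R) : Prop :=
  forall (n : nat) (s : R), I s -> ex_derive_n f n s.

Definition bitorsion (et eT eN1 : R) (kappa r : R -> R) (s : R) : R :=
  r s - et * eT * eN1 * kappa s.

(* beta : I -> Q_v is a unit speed (pseudo arc length) semi-real quaternionic
   curve with non-null Serret--Frenet frame {T,N1,N2,N3}, principal curvature
   kappa, and k, r the principal curvature and torsion of the associated
   spatial quaternionic curve whose frame has causal characters et, en1, en2. *)
Definition serret_frenet (I : R -> Prop) (beta T N1 N2 N3 : R -> quat)
    (kappa k r : R -> R) (eT eN1 et en1 en2 : R) : Prop :=
  let rho := bitorsion et eT eN1 kappa r in
  is_sign eT /\ is_sign eN1 /\ is_sign et /\ is_sign en1 /\ is_sign en2 /\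
  smooth_on I kappa /\ smooth_on I k /\ smooth_on I r /\
  forall s, I s ->
    is_qderive beta s (T s) /\
    h (T s) (T s) = eT /\ h (N1 s) (N1 s) = eN1 /\
    h (N2 s) (N2 s) = en1 * eT /\ h (N3 s) (N3 s) = en2 * eT /\
    h (T s) (N1 s) = 0 /\ h (T s) (N2 s) = 0 /\ h (T s) (N3 s) = 0 /\
    h (N1 s) (N2 s) = 0 /\ h (N1 s) (N3 s) = 0 /\ h (N2 s) (N3 s) = 0 /\
    is_qderive T s (qscale (eN1 * kappa s) (N1 s)) /\
    is_qderive N1 s (qadd (qscale (- (et * eN1 * kappa s)) (T s))
                          (qscale (en1 * k s) (N2 s))) /\
    is_qderive N2 s (qadd (qscale (- (et * k s)) (N1 s))
                          (qscale (en1 * rho s) (N3 s))) /\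
    is_qderive N3 s (qscale (- (en2 * rho s)) (N2 s)).

Definition rectifying (I : R -> Prop) (gamma T N2 N3 : R -> quat) : Prop :=
  exists lam mu nu : R -> R,
    forall s, I s ->
      ex_derive lam s /\ ex_derive mu s /\ ex_derive nu s /\
      gamma s = qadd (qscale (lam s) (T s))
                     (qadd (qscale (mu s) (N2 s)) (qscale (nu s) (N3 s))).

(* beta is congruent (up to a translation, which leaves the Serret--Frenet
   frame unchanged) to a rectifying curve. *)
Definition congruent_to_rectifying (I : R -> Prop) (beta T N2 N3 : R -> quat)
  : Prop :=
  exists m : quat, rectifying I (fun s => qadd (beta s) m) T N2 N3.

(* Main.v *)
Require Import Defs.
From Stdlib Require Import Reals Lra Classical.
From Coquelicot Require Import Coquelicot.
Open Scope R_scope.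

Lemma deq (f : R -> R) (s l l' : R) : is_derive f s l -> l = l' -> is_derive f s l'.
Proof. intros H ->; exact H. Qed.
Lemma dmul (f g : R -> R) (s a b : R) : is_derive f s a -> is_derive g s b ->
  is_derive (fun u => f u * g u) s (a * g s + f s * b).
Proof. intros Ha Hb. apply (is_derive_mult f g s a b Ha Hb). intros; apply Rmult_comm. Qed.
Lemma dadd (f g : R -> R) (s a b : R) : is_derive f s a -> is_derive g s b ->
  is_derive (fun u => f u + g u) s (a + b).
Proof. intros Ha Hb. apply (is_derive_plus f g s a b Ha Hb). Qed.
Lemma dsub (f g : R -> R) (s a b : R) : is_derive f s a -> is_derive g s b ->
  is_derive (fun u => f u - g u) s (a - b).
Proof. intros Ha Hb. apply (is_derive_minus f g s a b Ha Hb). Qed.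
Lemma dconst (a s : R) : is_derive (fun _ => a) s 0.
Proof. apply (is_derive_const a s). Qed.
Lemma did s : is_derive (fun u => u) s 1.
Proof. apply (is_derive_id s). Qed.

Lemma der_h p q s dp dq : is_qderive p s dp -> is_qderive q s dq ->
  is_derive (fun u => h (p u) (q u)) s (h dp (q s) + h (p s) dq).
Proof.
  intros (P1&P2&P3&P4) (Q1&Q2&Q3&Q4). unfold h.
  eapply deq.
  apply dsub; [apply dsub|]; [apply dadd| |]; apply dmul; eauto.
  simpl. ring.
Qed.

Lemma const_int (I : R -> Prop) f : is_interval I ->
  (forall s, I s -> is_derive f s 0) -> forall a b, I a -> I b -> f a = f b.
Proof.
  intros HI Hd a b Ha Hb.
  assert (Hin : forall x, Rmin a b <= x <= Rmax a b -> I x).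
  { intros x Hx. unfold Rmin, Rmax in Hx. destruct (Rle_dec a b).
    - apply (HI a x b); auto.
    - apply (HI b x a); auto. }
  destruct (MVT_gen f a b (fun _ => 0)) as (x & _ & Hx).
  - intros x Hx. apply Hd, Hin; lra.
  - intros x Hx. apply continuity_pt_filterlim. apply (ex_derive_continuous f x).
    eexists. apply Hd, Hin; auto.
  - lra.
Qed.

Definition Ff (kappa k r : R -> R) (et eT eN1 c : R) (u : R) : R :=
  (kappa u * k u + (u + c) * (Derive kappa u * k u - kappa u * Derive k u))
        / (k u ^ 2 * bitorsion et eT eN1 kappa r u).

Lemma exF (kap k r : R -> R) c et eT eN1 s (H1 : ex_derive kap s) (H2 : ex_derive k s)
  (H3 : ex_derive (Derive kap) s) (H4 : ex_derive (Derive k) s) (H5 : ex_derive r s)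
  (Hk : k s <> 0) (Hr : bitorsion et eT eN1 kap r s <> 0) :
  ex_derive (Ff kap k r et eT eN1 c) s.
Proof. unfold Ff, bitorsion in *. auto_derive. repeat split; auto.
  repeat apply Rmult_integral_contrapositive_currified; auto; try lra.
Qed.

Lemma hG (kap k : R -> R) c s (H1 : ex_derive kap s) (H2 : ex_derive k s) (Hk : k s <> 0) :
  is_derive (fun u => kap u * (u + c) / k u) s
   ((kap s * k s + (s + c) * (Derive kap s * k s - kap s * Derive k s)) / k s ^ 2).
Proof.
  eapply deq.
  apply (is_derive_div (fun u => kap u * (u + c)) k s).
  - apply dmul. apply Derive_correct, H1.
    eapply deq; [apply dadd; [apply did | apply dconst] | reflexivity].
  - apply Derive_correct, H2.
  - exact Hk.
  - simpl; field; auto.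
Qed.

Lemma uniq (f : R -> R) s a b : is_derive f s a -> is_derive f s b -> a = b.
Proof. intros Ha Hb. rewrite <- (is_derive_unique _ _ _ Ha). apply is_derive_unique, Hb. Qed.

Lemma loc_ext (I : R -> Prop) (f g : R -> R) s l : open I -> I s ->
  (forall t, I t -> f t = g t) -> is_derive f s l -> is_derive g s l.
Proof.
  intros HIo Hs E Hd. apply (is_derive_ext_loc f g s l); auto.
  apply (filter_imp I); auto; apply HIo, Hs.
Qed.

Lemma hsym p q : h p q = h q p.
Proof. unfold h; ring. Qed.
Lemma h_comb a b c X Y Z W :
  h (qadd (qscale a X) (qadd (qscale b Y) (qscale c Z))) W = a * h X W + b * h Y W + c * h Z W.
Proof. unfold h, qadd, qscale; simpl; ring. Qed.
Lemma h_add2 P a b X Y : h P (qadd (qscale a X) (qscale b Y)) = a * h P X + b * h P Y.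
Proof. unfold h, qadd, qscale; simpl; ring. Qed.
Lemma h_scal P a X : h P (qscale a X) = a * h P X.
Proof. unfold h, qadd, qscale; simpl; ring. Qed.

Lemma qder_addc f m s v : is_qderive f s v -> is_qderive (fun u => qadd (f u) m) s v.
Proof.
  intros (B1&B2&B3&B4). unfold is_qderive, qadd; simpl. split; [|split; [|split]].
  - eapply (deq _ s (q1 v + 0) (q1 v)); [apply (dadd (fun u => q1 (f u)) (fun _ => q1 m)); [exact B1 | apply dconst] | simpl; ring].
  - eapply (deq _ s (q2 v + 0) (q2 v)); [apply (dadd (fun u => q2 (f u)) (fun _ => q2 m)); [exact B2 | apply dconst] | simpl; ring].
  - eapply (deq _ s (q3 v + 0) (q3 v)); [apply (dadd (fun u => q3 (f u)) (fun _ => q3 m)); [exact B3 | apply dconst] | simpl; ring].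
  - eapply (deq _ s (q4 v + 0) (q4 v)); [apply (dadd (fun u => q4 (f u)) (fun _ => q4 m)); [exact B4 | apply dconst] | simpl; ring].
Qed.

Theorem theorem4p2
  (I : R -> Prop) (HIo : open I) (HIi : is_interval I)
  (beta T N1 N2 N3 : R -> quat) (kappa k r : R -> R)
  (eT eN1 et en1 en2 : R)
  (Hsf : serret_frenet I beta T N1 N2 N3 kappa k r eT eN1 et en1 en2)
  (Hnz : forall s, I s ->
     kappa s <> 0 /\ k s <> 0 /\ bitorsion et eT eN1 kappa r s <> 0) :
  congruent_to_rectifying I beta T N2 N3 <->
  exists c : R, forall s, I s ->
    et * en1 * eN1 *
      (kappa s * bitorsion et eT eN1 kappa r s * (s + c) / k s)
    + et * en2 * eN1 *
      Derive (fun u =>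
        (kappa u * k u + (u + c) * (Derive kappa u * k u - kappa u * Derive k u))
        / (k u ^ 2 * bitorsion et eT eN1 kappa r u)) s
    = 0.
Proof.
  rename I into J.
  destruct Hsf as (HeT & HeN1 & Het & Hen1 & Hen2 & Sk & Sk2 & Sr & Hf).
  assert (Dk : forall s, J s -> ex_derive kappa s) by (intros s Hs; exact (Sk 1%nat s Hs)).
  assert (Dk2 : forall s, J s -> ex_derive k s) by (intros s Hs; exact (Sk2 1%nat s Hs)).
  assert (Dr : forall s, J s -> ex_derive r s) by (intros s Hs; exact (Sr 1%nat s Hs)).
  assert (DDk : forall s, J s -> ex_derive (Derive kappa) s) by (intros s Hs; exact (Sk 2%nat s Hs)).
  assert (DDk2 : forall s, J s -> ex_derive (Derive k) s) by (intros s Hs; exact (Sk2 2%nat s Hs)).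
  assert (HFd : forall c s, J s -> ex_derive (Ff kappa k r et eT eN1 c) s).
  { intros c s Hs. destruct (Hnz s Hs) as (_&?&?). apply exF; auto. }
  split.
  - intros [m [lam [mu [nu Hrec]]]].
    destruct (classic (exists s0, J s0)) as [[s0 Hs0]|Hne];
      [| exists 0; intros s Hs; exfalso; eauto].
    set (gam := fun u => qadd (beta u) m).
    assert (Hg : forall s, J s -> is_qderive gam s (T s)).
    { intros s Hs. destruct (Hf s Hs) as [(B1&B2&B3&B4) _].
      unfold gam. apply qder_addc. split; [|split; [|split]]; auto. }
    assert (Hf0 : forall s, J s -> h (gam s) (N1 s) = 0).
    { intros s Hs. destruct (Hrec s Hs) as (_&_&_&E).
      destruct (Hf s Hs) as (_&_&_&_&_&o1&o2&o3&o4&o5&o6&_).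
      unfold gam. rewrite E, h_comb, (hsym (N2 s)), (hsym (N3 s)), o1, o4, o5. ring. }
    assert (D1 : forall s, J s -> is_derive (fun u => h (gam u) (T u)) s eT).
    { intros s Hs. destruct (Hf s Hs) as (_&HTT&_&_&_&_&_&_&_&_&_&dT&_).
      eapply deq. apply der_h; [apply Hg; auto | exact dT].
      rewrite h_scal, Hf0, HTT; auto; ring. }
    assert (Hc1 : forall s, J s ->
       h (gam s) (T s) - eT * s = h (gam s0) (T s0) - eT * s0).
    { intros s Hs. apply (const_int J (fun u => h (gam u) (T u) - eT * u)); auto.
      intros t Ht. eapply deq. apply dsub. apply D1; auto. apply is_derive_scal, did. ring. }
    set (c := eT * (h (gam s0) (T s0) - eT * s0)).
    assert (Hf1 : forall s, J s -> h (gam s) (T s) = eT * (s + c)).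
    { intros s Hs. specialize (Hc1 s Hs). unfold c. destruct HeT as [E|E]; rewrite E in *; lra. }
    set (A := en1 * et * eN1 * eT).
    assert (Hf2 : forall s, J s -> h (gam s) (N2 s) = A * (kappa s * (s + c) / k s)).
    { intros s Hs. destruct (Hf s Hs) as (_&_&_&_&_&o1&_&_&_&_&_&_&dN1&_).
      destruct (Hnz s Hs) as (Hk0&Hk&Hr).
      assert (E0 := uniq _ _ _ _ (der_h _ _ _ _ _ (Hg s Hs) dN1)
         (loc_ext J (fun _ => 0) _ s 0 HIo Hs (fun t Ht => eq_sym (Hf0 t Ht)) (dconst 0 s))).
      rewrite h_add2, o1, Hf1 in E0 by auto.
      unfold A. destruct Hen1 as [E|E]; rewrite E in *; field_simplify_eq; auto; nra. }
    set (Fc := Ff kappa k r et eT eN1 c).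
    assert (Hf3 : forall s, J s -> h (gam s) (N3 s) = A * en1 * Fc s).
    { intros s Hs. destruct (Hf s Hs) as (_&_&_&_&_&_&o2&_&_&_&_&_&_&dN2&_).
      destruct (Hnz s Hs) as (Hk0&Hk&Hr).
      assert (E2 := uniq _ _ _ _ (der_h _ _ _ _ _ (Hg s Hs) dN2)
         (loc_ext J (fun u => A * (kappa u * (u + c) / k u)) _ s _ HIo Hs
            (fun t Ht => eq_sym (Hf2 t Ht))
            (is_derive_scal _ _ A _ (hG kappa k c s (Dk s Hs) (Dk2 s Hs) Hk)))).
      rewrite h_add2, o2, Hf0 in E2 by auto.
      unfold Fc, Ff.
      set (x := h (gam s) (N3 s)) in *. set (rho := bitorsion et eT eN1 kappa r s) in *.
      assert (E2' : en1 * rho * x = A * ((kappa s * k s + (s + c) * (Derive kappa s * k s - kappa s * Derive k s)) / k s ^ 2)) by (rewrite <- E2; ring).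
      assert (Hn1 : en1 <> 0) by (destruct Hen1 as [E|E]; rewrite E; lra).
      apply (Rmult_eq_reg_l (en1 * rho)); [| apply Rmult_integral_contrapositive_currified; auto].
      rewrite E2'. destruct Hen1 as [E|E]; rewrite E; field; split; auto; apply pow_nonzero; auto. }
    exists c. intros s Hs.
    destruct (Hf s Hs) as (_&_&_&_&_&_&_&o3&_&_&_&_&_&_&dN3).
    destruct (Hnz s Hs) as (Hk0&Hk&Hr).
    assert (E3 := uniq _ _ _ _ (der_h _ _ _ _ _ (Hg s Hs) dN3)
         (loc_ext J (fun u => A * en1 * Fc u) _ s _ HIo Hs
            (fun t Ht => eq_sym (Hf3 t Ht))
            (is_derive_scal _ _ (A * en1) _ (Derive_correct _ _ (HFd c s Hs))))).
    rewrite h_scal, o3, Hf2 in E3 by auto.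
    change (Derive (fun u => _) s) with (Derive Fc s). fold Fc in E3.
    set (rho := bitorsion et eT eN1 kappa r s) in *.
    assert (HA : A * en1 <> 0).
    { unfold A. destruct HeT as [E|E]; rewrite E; destruct HeN1 as [E'|E']; rewrite E';
      destruct Het as [E''|E'']; rewrite E''; destruct Hen1 as [F|F]; rewrite F; lra. }
    assert (HD : Derive Fc s = - (en1 * en2) * rho * (kappa s * (s + c) / k s)).
    { apply (Rmult_eq_reg_l (A * en1)); auto. rewrite <- E3.
      unfold A; destruct Hen1 as [HF|HF]; rewrite HF; unfold Rdiv; ring. }
    rewrite HD. destruct Hen2 as [HF|HF]; rewrite HF; unfold Rdiv; ring.
  - intros [c Hc].
    destruct (classic (exists s0, J s0)) as [[s0 Hs0]|Hne];
      [| exists (Quat 0 0 0 0), (fun _ => 0), (fun _ => 0), (fun _ => 0);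
         intros s Hs; exfalso; eauto].
    set (Fc := Ff kappa k r et eT eN1 c).
    set (lam := fun u : R => u + c).
    set (mu := fun u => et * eN1 * (kappa u * (u + c) / k u)).
    set (nu := fun u => en2 * et * eN1 * Fc u).
    assert (Hlam : forall s, is_derive lam s 1).
    { intro s. unfold lam. eapply deq; [apply dadd; [apply did|apply dconst] | simpl; ring]. }
    assert (Hmu : forall s, J s -> is_derive mu s (et * eN1 *
        ((kappa s * k s + (s + c) * (Derive kappa s * k s - kappa s * Derive k s)) / k s ^ 2))).
    { intros s Hs. unfold mu. apply is_derive_scal, hG; auto. apply Hnz; auto. }
    assert (Hnu : forall s, J s -> is_derive nu s (en2 * et * eN1 * Derive Fc s)).
    { intros s Hs. unfold nu. apply is_derive_scal, Derive_correct, HFd; auto. }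
    set (Xf := fun (q : quat -> R) u =>
            q (beta u) - (lam u * q (T u) + (mu u * q (N2 u) + nu u * q (N3 u)))).
    assert (HX : forall q : quat -> R, (forall a b, q (qadd a b) = q a + q b) ->
        (forall a b, q (qscale a b) = a * q b) ->
        (forall f s v, is_qderive f s v -> is_derive (fun u => q (f u)) s (q v)) ->
        forall s, J s -> is_derive (Xf q) s 0).
    { intros q Qa Qs Qd s Hs.
      destruct (Hf s Hs) as (Hb&_&_&_&_&_&_&_&_&_&_&dT&_&dN2&dN3).
      destruct (Hnz s Hs) as (Hk0&Hk&Hr).
      pose proof (Hc s Hs) as Hcs. change (Derive (fun u => _) s) with (Derive Fc s) in Hcs.
      set (rho := bitorsion et eT eN1 kappa r s) in *.
      unfold Xf.
      eapply deq.
      { apply (dsub (fun u => q (beta u))). apply Qd, Hb.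
        apply dadd. apply dmul. apply Hlam. apply Qd, dT.
        apply dadd; apply dmul; [apply Hmu; auto | apply Qd, dN2 | apply Hnu; auto | apply Qd, dN3]. }
      rewrite !Qa, !Qs. unfold lam, mu, nu.
      assert (C1 : (s + c) * (eN1 * kappa s) + et * eN1 * (kappa s * (s + c) / k s) * (- (et * k s)) = 0).
      { destruct Het as [E|E]; rewrite E; field; auto. }
      assert (C2 : et * eN1 * ((kappa s * k s + (s + c) * (Derive kappa s * k s - kappa s * Derive k s)) / k s ^ 2)
                   + en2 * et * eN1 * Fc s * (- (en2 * rho)) = 0).
      { unfold Fc, Ff. fold rho. destruct Hen2 as [E|E]; rewrite E; field; split; auto. }
      assert (C3 : et * eN1 * (kappa s * (s + c) / k s) * (en1 * rho) + en2 * et * eN1 * Derive Fc s = 0).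
      { rewrite <- Hcs. unfold Rdiv; ring. }
      transitivity (- (((s + c) * (eN1 * kappa s) + et * eN1 * (kappa s * (s + c) / k s) * (- (et * k s))) * q (N1 s)
        + (et * eN1 * ((kappa s * k s + (s + c) * (Derive kappa s * k s - kappa s * Derive k s)) / k s ^ 2)
                   + en2 * et * eN1 * Fc s * (- (en2 * rho))) * q (N2 s)
        + (et * eN1 * (kappa s * (s + c) / k s) * (en1 * rho) + en2 * et * eN1 * Derive Fc s) * q (N3 s))).
      + unfold Rdiv; ring.
      + rewrite C1, C2, C3; ring. }
    exists (Quat (- Xf q1 s0) (- Xf q2 s0) (- Xf q3 s0) (- Xf q4 s0)), lam, mu, nu.
    intros s Hs.
    split; [eexists; apply Hlam |].
    split; [eexists; apply Hmu; auto |].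
    split; [eexists; apply Hnu; auto |].
    assert (K1 := const_int J (Xf q1) HIi (HX q1 (fun a b => eq_refl) (fun a b => eq_refl)
                    (fun f s v H => proj1 H)) s s0 Hs Hs0).
    assert (K2 := const_int J (Xf q2) HIi (HX q2 (fun a b => eq_refl) (fun a b => eq_refl)
                    (fun f s v H => proj1 (proj2 H))) s s0 Hs Hs0).
    assert (K3 := const_int J (Xf q3) HIi (HX q3 (fun a b => eq_refl) (fun a b => eq_refl)
                    (fun f s v H => proj1 (proj2 (proj2 H)))) s s0 Hs Hs0).
    assert (K4 := const_int J (Xf q4) HIi (HX q4 (fun a b => eq_refl) (fun a b => eq_refl)
                    (fun f s v H => proj2 (proj2 (proj2 H)))) s s0 Hs Hs0).
    unfold qadd, qscale; simpl. unfold Xf in *. f_equal; lra.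
Qed.
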